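(* Let $G$ be a factor-critical equimatchable graph. Then $G$ is edge-stable if and only if there is no set $R$ of three vertices of $G$ inducing a copy of $\overline{P_3}$ (i.e. $G[R]$ has exactly one edge) such that $G\setminus R$ has a perfect matching.
   Context: All graphs are finite and simple. A graph is equimatchable if all its maximal matchings have the same cardinality; an equimatchable graph $G$ is edge-stable if $G\setminus e$ (delete edge $e$, keep vertices) is equimatchable for every $e\in E(G)$. A graph $G$ is factor-critical if $G-v$ has a perfect matching for every $v\in V(G)$. $\overline{P_3}$ is the complement of the path on three vertices, i.e. one edge plus an isolated vertex. For $R\subseteq V(G)$, $G\setminus R$ is the subgraph induced by $V(G)\setminus R$. *)

(* Defs.v *)
From mathcomp Require Import all_boot.
Set Implicit Arguments. Unset Strict Implicit. Unset Printing Implicit Defensive.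

(* A finite simple graph is given by a vertex set V : {set T} over a finType T
   and a symmetric irreflexive adjacency relation e : rel T (only its
   restriction to V matters).  Induced subgraphs G \ R are obtained by
   shrinking the vertex set to V :\: R; edge deletion modifies e. *)

Definition simple_graph (T : finType) (e : rel T) :=
  irreflexive e /\ symmetric e.

Definition is_edge (T : finType) (V : {set T}) (e : rel T) (f : {set T}) :=
  exists x y, [/\ x \in V, y \in V, e x y & f = [set x; y]].

Definition matching (T : finType) (V : {set T}) (e : rel T) (M : {set {set T}}) :=
  (forall f, f \in M -> is_edge V e f) /\
  (forall f g, f \in M -> g \in M -> f != g -> [disjoint f & g]).

Definition maximal_matching (T : finType) (V : {set T}) (e : rel T)
    (M : {set {set T}}) :=
  matching V e M /\ (forall M' : {set {set T}}, M \proper M' -> ~ matching V e M').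

Definition equimatchable (T : finType) (V : {set T}) (e : rel T) :=
  forall M1 M2, maximal_matching V e M1 -> maximal_matching V e M2 ->
    #|M1| = #|M2|.

Definition perfect_matching (T : finType) (V : {set T}) (e : rel T)
    (M : {set {set T}}) :=
  matching V e M /\ cover M = V.

Definition has_perfect_matching (T : finType) (V : {set T}) (e : rel T) :=
  exists M, perfect_matching V e M.

Definition factor_critical (T : finType) (V : {set T}) (e : rel T) :=
  forall v, v \in V -> has_perfect_matching (V :\ v) e.

Definition del_edge (T : finType) (e : rel T) (x y : T) : rel T :=
  fun u v => e u v && ~~ ((u == x) && (v == y) || (u == y) && (v == x)).

Definition edge_stable (T : finType) (V : {set T}) (e : rel T) :=
  equimatchable V e /\
  (forall x y, x \in V -> y \in V -> e x y -> equimatchable V (del_edge e x y)).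

Definition induces_coP3 (T : finType) (e : rel T) (R : {set T}) :=
  exists a b c, [/\ R = [set a; b; c], a != b, b != c, a != c &
    [/\ e a b, ~~ e b c & ~~ e a c]].

(* Main.v *)
Require Import Defs.
From mathcomp Require Import all_boot.
From mathcomp Require Import zify.
Set Implicit Arguments. Unset Strict Implicit.

Section Aux.
Context {T : finType}.
Implicit Types (V W R : {set T}) (e : rel T) (M : {set {set T}}).

Lemma edge_card2 V e f : irreflexive e -> is_edge V e f -> #|f| = 2.
Proof.
move=> irr [x [y [_ _ exy ->]]]; rewrite cards2.
by case: eqP exy => // ->; rewrite irr.
Qed.

Lemma matching_card V e M : irreflexive e -> matching V e M ->
  #|cover M| = #|M| * 2.
Proof.
move=> irr [He Hd].
have tM : trivIset M by apply/trivIsetP => A B HA HB; exact: Hd.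
move: tM; rewrite /trivIset => /eqP <-.
rewrite -sum_nat_const; apply: eq_bigr => f Hf; exact: edge_card2 (He f Hf).
Qed.

Lemma cover_sub V e M : matching V e M -> cover M \subset V.
Proof.
move=> [He _]; apply/subsetP => u /bigcupP [f Hf uf].
by case: (He f Hf) => [x [y [xV yV _ ef]]]; move: uf; rewrite ef !inE => /orP [] /eqP ->.
Qed.

Lemma matching_mono W V e1 e2 M : W \subset V ->
  (forall u v, u \in W -> v \in W -> e1 u v -> e2 u v) ->
  matching W e1 M -> matching V e2 M.
Proof.
move=> /subsetP WV H [He Hd]; split => // f Hf.
case: (He f Hf) => [x [y [xW yW exy ef]]].
by exists x, y; split => //; [apply: WV | apply: WV | apply: H].
Qed.

Lemma maximal_of V e M : matching V e M ->
  (forall x y, x \in V -> y \in V -> e x y -> (x \in cover M) || (y \in cover M)) ->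
  maximal_matching V e M.
Proof.
move=> HM Hc; split => // M' /properP [sub [f fM' fM]] [He' Hd'].
case: (He' f fM') => [x [y [xV yV exy ef]]].
have := Hc x y xV yV exy.
case/orP => /bigcupP [g gM xg].
- have := Hd' f g fM' (subsetP sub g gM).
  have -> : f != g by apply: contraNneq fM => ->.
  move=> /(_ isT) D; have := disjointFr D (x:=x); rewrite ef !inE eqxx xg.
  by move=> /(_ isT).
- have := Hd' f g fM' (subsetP sub g gM).
  have -> : f != g by apply: contraNneq fM => ->.
  move=> /(_ isT) D; have := disjointFr D (x:=y); rewrite ef !inE eqxx orbT xg.
  by move=> /(_ isT).
Qed.

Lemma maximal_cov V e M x y : irreflexive e -> maximal_matching V e M ->
  x \in V -> y \in V -> e x y -> (x \in cover M) || (y \in cover M).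
Proof.
move=> irr [[He Hd] Hmax] xV yV exy.
apply/negPn/negP; rewrite negb_or => /andP [xn yn].
have fM : [set x; y] \notin M.
  apply/negP => fM; move/negP: xn; apply; apply/bigcupP; exists [set x; y] => //.
  by rewrite !inE eqxx.
apply: (Hmax ([set x; y] |: M)).
  apply/properP; split; first exact: subsetUr.
  by exists [set x; y] => //; rewrite !inE eqxx.
split.
  move=> f; rewrite in_setU1 => /orP [/eqP -> | fM'].
    by exists x, y.
  exact: He.
have disj : forall g, g \in M -> [disjoint [set x; y] & g].
  move=> g gM; rewrite disjoint_sym disjoints_subset; apply/subsetP => u ug.
  rewrite !inE negb_or; apply/andP; split; apply/negP => /eqP Hu; subst u.
    by move/negP: xn; apply; apply/bigcupP; exists g.
  by move/negP: yn; apply; apply/bigcupP; exists g.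
move=> f g; rewrite !in_setU1 => /orP [/eqP -> | fM'] /orP [/eqP -> | gM'].
- by rewrite eqxx.
- by move=> _; apply: disj.
- by move=> _; rewrite disjoint_sym; apply: disj.
- exact: Hd.
Qed.

End Aux.

Section Aux2.
Context {T : finType}.
Implicit Types (V W R : {set T}) (e : rel T) (M : {set {set T}}).

Lemma add_matching V e M x y : matching V e M -> x \in V -> y \in V -> e x y ->
  x \notin cover M -> y \notin cover M ->
  matching V e ([set x; y] |: M) /\ [set x; y] \notin M.
Proof.
move=> [He Hd] xV yV exy xn yn.
have fM : [set x; y] \notin M.
  apply/negP => fM; move/negP: xn; apply; apply/bigcupP; exists [set x; y] => //.
  by rewrite !inE eqxx.
split => //; split.
  move=> f; rewrite in_setU1 => /orP [/eqP -> | fM'].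
    by exists x, y.
  exact: He.
have disj : forall g, g \in M -> [disjoint [set x; y] & g].
  move=> g gM; rewrite disjoint_sym disjoints_subset; apply/subsetP => u ug.
  rewrite !inE negb_or; apply/andP; split; apply/negP => /eqP Hu; subst u.
    by move/negP: xn; apply; apply/bigcupP; exists g.
  by move/negP: yn; apply; apply/bigcupP; exists g.
move=> f g; rewrite !in_setU1 => /orP [/eqP -> | fM'] /orP [/eqP -> | gM'].
- by rewrite eqxx.
- by move=> _; apply: disj.
- by move=> _; rewrite disjoint_sym; apply: disj.
- exact: Hd.
Qed.

Lemma cover_add M x y : [set x; y] \notin M ->
  cover ([set x; y] |: M) = [set x; y] :|: cover M.
Proof. by move=> fM; rewrite /cover big_setU1. Qed.

Lemma matching_cover V e M : matching V e M -> matching (cover M) e M.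
Proof.
move=> [He Hd]; split => // f Hf.
case: (He f Hf) => [u [v [uV vV euv ef]]]; exists u, v; split => //;
  apply/bigcupP; exists f => //; rewrite ef !inE eqxx ?orbT //.
Qed.

Lemma setDDK V (C : {set T}) : C \subset V -> V :\: (V :\: C) = C.
Proof. by move=> CV; rewrite setDDr setDv set0U; apply/setIidPr. Qed.

End Aux2.

Theorem lemma3p2 (T : finType) (V : {set T}) (e : rel T) :
  simple_graph e ->
  factor_critical V e ->
  equimatchable V e ->
  (edge_stable V e <->
   ~ (exists R : {set T},
        [/\ R \subset V, #|R| = 3, induces_coP3 e R &
            has_perfect_matching (V :\: R) e])).
Proof.
move=> [irr sym] fc eqm.
have delE : forall x y u v, del_edge e x y u v -> e u v by move=> x y u v /andP [].
have irrd : forall x y, irreflexive (del_edge e x y).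
  by move=> x y u; rewrite /del_edge irr.
have Nmax : forall a, a \in V -> exists N, [/\ maximal_matching V e N,
    (forall b, maximal_matching V (del_edge e a b) N) & #|N| * 2 = #|V| - 1].
  move=> a aV; have [N [HN cN]] := fc a aV.
  exists N; split.
  - apply: maximal_of.
      by apply: (matching_mono (subD1set V a) _ HN).
    move=> u v uV vV euv; rewrite cN !inE uV vV; apply/negPn/negP.
    rewrite negb_or !andbT !negbK => /andP [/eqP ua /eqP va]; subst.
    by rewrite irr in euv.
  - move=> b; apply: maximal_of.
      apply: (matching_mono (subD1set V a) _ HN).
      move=> u v; rewrite !inE => /andP [ua _] /andP [va _] euv.
      by rewrite /del_edge euv (negbTE ua) (negbTE va) !andbF.
    move=> u v uV vV /delE euv; rewrite cN !inE uV vV; apply/negPn/negP.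
    rewrite negb_or !andbT !negbK => /andP [/eqP ua /eqP va]; subst.
    by rewrite irr in euv.
  - rewrite -(matching_card irr HN) cN (cardsD1 a V) aV; lia.
split.
- move=> [_ stab] [R [RV R3 [a [b [c [Rdef ab bc ac [eab nbc nac]]]]] [M [HM cM]]]].
  have aV : a \in V by apply: (subsetP RV); rewrite Rdef !inE eqxx.
  have bV : b \in V by apply: (subsetP RV); rewrite Rdef !inE eqxx orbT.
  have [N [_ mN cN]] := Nmax a aV.
  have mM : maximal_matching V (del_edge e a b) M.
    apply: maximal_of.
      apply: (matching_mono (subsetDl V R) _ HM).
      move=> u v; rewrite Rdef !inE => /andP [uR _] _ euv.
      rewrite /del_edge euv /=; move: uR; rewrite !negb_or => /andP [/andP [/negbTE -> /negbTE ->] _].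
      by [].
    move=> u v uV vV duv; rewrite cM Rdef !inE uV vV; apply/negPn/negP.
    rewrite negb_or !andbT !negbK => /andP [Hu Hv].
    move: duv; case/orP: Hu => [/orP [] | ] /eqP ->; case/orP: Hv => [/orP [] | ] /eqP -> ;
      rewrite /del_edge ?eqxx ?irr ?(sym c b) ?(sym c a) ?(negbTE nbc) ?(negbTE nac) /= ?orbT ?andbF //.
  have := stab a b aV bV eab M N mM (mN b).
  have := matching_card irr HM; rewrite cM cardsD (setIidPr RV) R3.
  have := subset_leq_card RV; rewrite R3.
  lia.
- move=> noR; split => // x y xV yV exy.
  have claim : forall M, maximal_matching V (del_edge e x y) M -> maximal_matching V e M.
    move=> M mM.
    have HMe : matching V e M.
      by apply: (matching_mono (subxx V) _ mM.1) => u v _ _ /delE.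
    apply: maximal_of => // u v uV vV euv.
    apply/negPn/negP; rewrite negb_or => /andP [un vn].
    have nd : ~~ del_edge e x y u v.
      apply/negP => duv; have := maximal_cov (irrd x y) mM uV vV duv.
      by rewrite (negbTE un) (negbTE vn).
    have [xn yn] : x \notin cover M /\ y \notin cover M.
      move: nd; rewrite /del_edge euv /= negbK.
      by case/orP => /andP [/eqP <- /eqP <-].
    have [HM' fM] := add_matching HMe xV yV exy xn yn.
    have mM' : maximal_matching V e ([set x; y] |: M).
      apply: maximal_of => // s t sV tV est.
      rewrite cover_add // !inE.
      case: (boolP ((s == x) || (s == y))) => [//|]; rewrite negb_or => /andP [sx sy].
      case: (boolP ((t == x) || (t == y))) => [_|]; first by rewrite /= !orbT.
      rewrite negb_or => /andP [tx ty].
      have dst : del_edge e x y s t by rewrite /del_edge est (negbTE sx) (negbTE sy).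
      by have := maximal_cov (irrd x y) mM sV tV dst; case/orP => ->; rewrite ?orbT.
    have [N [mN _ cN]] := Nmax x xV.
    have cardM' := eqm _ _ mM' mN.
    move: cardM'; rewrite cardsU1 fM => cardM'.
    have cMc := matching_card irr HMe.
    have cMV := cover_sub HMe.
    set R := V :\: cover M.
    have R3 : #|R| = 3.
      rewrite /R cardsD (setIidPr cMV) cMc.
      have := subset_leq_card cMV; rewrite cMc.
      rewrite add1n in cardM'; move: cN cardM'.
      move: (#|M|) (#|N|) (#|V|) => m0 n0 v0; clear; lia.
    have xR : x \in R by rewrite /R inE xn xV.
    have yR : y \in R by rewrite /R inE yn yV.
    have xy : x != y by apply: contraTneq exy => ->; rewrite irr.
    have R1 : #|R :\ x :\ y| == 1.
      move: R3; rewrite (cardsD1 x R) xR (cardsD1 y (R :\ x)) in_setD1 yR eq_sym xy /=.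
      by rewrite add1n => -[] /eqP.
    have [z Hz] := cards1P R1.
    have zR : z \in R :\ x :\ y by rewrite Hz inE.
    move: (zR); rewrite !inE => /andP [zy /andP [zx /andP [zc zV]]].
    apply: noR; exists R; split.
    + exact: subsetDl.
    + exact: R3.
    + exists x, y, z; split => //.
      * apply/setP => w; rewrite ?in_setU1 !in_setU !in_set1.
        case: (boolP (w == x)) => [/eqP -> | wx]; first by rewrite xR.
        case: (boolP (w == y)) => [/eqP -> | wy]; first by rewrite yR orbT.
        have := congr1 (fun S : {set T} => w \in S) Hz; rewrite /= !inE wx wy /=.
        by move=> ->.
      * by rewrite eq_sym.
      * by rewrite eq_sym.
      * split => //.
        -- apply/negP => eyz.
           have dyz : del_edge e x y y z.
             by rewrite /del_edge eyz (negbTE zx) eq_sym (negbTE xy) /= andbF.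
           by have := maximal_cov (irrd x y) mM yV zV dyz; rewrite (negbTE yn) (negbTE zc).
        -- apply/negP => exz.
           have dxz : del_edge e x y x z.
             by rewrite /del_edge exz (negbTE zy) (negbTE xy) /= andbF.
           by have := maximal_cov (irrd x y) mM xV zV dxz; rewrite (negbTE xn) (negbTE zc).
    + exists M; split; last by rewrite /R setDDK.
      by rewrite /R setDDK //; apply: matching_cover HMe.
  by move=> M1 M2 m1 m2; apply: eqm; apply: claim.
Qed.
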